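(* Over all 3-periodics of $\mathcal{E}$, the centroid $X_2^\dagger$ of the focus-inversive triangle moves on the circle with center and radius \[C_2^\dagger=\left(-c\left(1+\rho^2\frac{2a^2-b^2-\delta}{3a^2b^2}\right),0\right),\qquad R_2^\dagger=\rho^2\,\frac{2a^2-b^2-\delta}{3ab^2}.\]
   Context: Let $a>b>0$ and let $\mathcal{E}$ be the ellipse $x^2/a^2+y^2/b^2=1$. Set $c=\sqrt{a^2-b^2}$, $\delta=\sqrt{a^4-a^2b^2+b^4}$, and let the foci be $f_1=(-c,0)$, $f_2=(c,0)$. A 3-periodic is a triangle $P_1P_2P_3$ with vertices on $\mathcal{E}$ such that at each vertex the normal to $\mathcal{E}$ bisects the angle formed by the two sides meeting at that vertex; these form a one-parameter family (one through every point of $\mathcal{E}$). Fix $\rho>0$; the focus-inversive triangle has vertices $P_i^\dagger=f_1+(\rho/d_{1,i})^2(P_i-f_1)$, $d_{1,i}=|P_i-f_1|$. *)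

(* Defs.v *)
From Stdlib Require Import Reals.
Open Scope R_scope.

Definition pt := (R * R)%type.

Definition padd (P Q : pt) : pt := (fst P + fst Q, snd P + snd Q).
Definition psub (P Q : pt) : pt := (fst P - fst Q, snd P - snd Q).
Definition pscale (k : R) (P : pt) : pt := (k * fst P, k * snd P).
Definition dot (P Q : pt) : R := fst P * fst Q + snd P * snd Q.
Definition pdist (P Q : pt) : R := sqrt (dot (psub P Q) (psub P Q)).

Definition on_ellipse (a b : R) (P : pt) : Prop :=
  (fst P) ^ 2 / a ^ 2 + (snd P) ^ 2 / b ^ 2 = 1.

(* A normal vector to the ellipse at P (gradient / 2). *)
Definition ellipse_normal (a b : R) (P : pt) : pt :=
  (fst P / a ^ 2, snd P / b ^ 2).

Definition unit_dir (P Q : pt) : pt := pscale (/ pdist Q P) (psub Q P).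

(* The normal line to the ellipse at P bisects the angle Q P S formed by the
   sides PQ and PS: the normal makes equal angles with the unit vectors
   along PQ and PS, i.e. it is orthogonal to their difference
   (equivalently, parallel to their sum, the internal bisector). *)
Definition normal_bisects (a b : R) (P Q S : pt) : Prop :=
  dot (ellipse_normal a b P) (psub (unit_dir P Q) (unit_dir P S)) = 0.

Definition three_periodic (a b : R) (P1 P2 P3 : pt) : Prop :=
  on_ellipse a b P1 /\ on_ellipse a b P2 /\ on_ellipse a b P3 /\
  P1 <> P2 /\ P2 <> P3 /\ P1 <> P3 /\
  normal_bisects a b P1 P2 P3 /\
  normal_bisects a b P2 P3 P1 /\
  normal_bisects a b P3 P1 P2.

Definition ell_c (a b : R) : R := sqrt (a ^ 2 - b ^ 2).
Definition ell_delta (a b : R) : R := sqrt (a ^ 4 - a ^ 2 * b ^ 2 + b ^ 4).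
Definition focus1 (a b : R) : pt := (- ell_c a b, 0).

Definition focus_inv (a b rho : R) (P : pt) : pt :=
  padd (focus1 a b)
       (pscale ((rho / pdist P (focus1 a b)) ^ 2) (psub P (focus1 a b))).

Definition centroid (P1 P2 P3 : pt) : pt :=
  pscale (/ 3) (padd P1 (padd P2 P3)).

(* Main.v *)
Require Import Defs.
From Stdlib Require Import Reals Nsatz Lra Psatz.
Open Scope R_scope.

Definition Gf a b (P Q : pt) := dot (ellipse_normal a b P) (psub Q P) / pdist Q P.

Lemma nb_G a b P Q S : normal_bisects a b P Q S -> Gf a b P Q = Gf a b P S.
Proof.
  destruct P as [p1 p2], Q as [q1 q2], S as [s1 s2].
  unfold normal_bisects, Gf, unit_dir, dot, psub, pscale, ellipse_normal; cbn [fst snd].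
  intros H. apply Rminus_diag_uniq. rewrite <- H. unfold Rdiv. ring.
Qed.

Lemma pdist_sym P Q : pdist P Q = pdist Q P.
Proof. destruct P, Q; unfold pdist, dot, psub; simpl; f_equal; ring. Qed.

Lemma Gsym a b P Q : a > 0 -> b > 0 -> on_ellipse a b P -> on_ellipse a b Q ->
  Gf a b P Q = Gf a b Q P.
Proof.
  intros ha hb hP hQ. unfold Gf. rewrite pdist_sym. f_equal.
  destruct P as [p1 p2], Q as [q1 q2]; unfold on_ellipse, dot, psub, ellipse_normal in *; cbn [fst snd] in *.
  apply Rminus_diag_uniq.
  transitivity ((q1^2/a^2 + q2^2/b^2) - (p1^2/a^2+p2^2/b^2)).
  - assert (a<>0) by lra; assert (b<>0) by lra; field; auto.
  - lra.
Qed.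

Lemma focal_poly a b c m X Y X' Y' : c*c = a*a-b*b ->
  1 - (X*X'+Y*Y') = m*(a*a+b*b) - m*(a*a-b*b)*(X*X'-Y*Y') ->
  (1+m*(c*c))*((a*X+c)*(a*X'+c) + (b*Y)*(b*Y'))
   - 2*m*a*c*((a*X+c)*(a+c*X') + (a*X'+c)*(a+c*X))
   + (m*(3*(a*a)-b*b)-1)*((a+c*X)*(a+c*X')) = 0.
Proof. intros hc hE. nsatz. Qed.

Lemma cross_id C1 S1 C2 S2 C3 S3 :
  C1*C1+S1*S1 = 1 -> C2*C2+S2*S2 = 1 -> C3*C3+S3*S3 = 1 ->
  4*(((C1-C2)*(S1-S3) - (S1-S2)*(C1-C3))*((C1-C2)*(S1-S3) - (S1-S2)*(C1-C3)))
  = ((C1-C2)*(C1-C2)+(S1-S2)*(S1-S2))*((C1-C3)*(C1-C3)+(S1-S3)*(S1-S3))*((C2-C3)*(C2-C3)+(S2-S3)*(S2-S3)).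
Proof. intros. nsatz. Qed.

Lemma sq_pos x : x <> 0 -> 0 < x*x.
Proof. intros h. destruct (Rlt_or_le 0 x); [nra|]. destruct (Rle_lt_or_eq_dec x 0 H); [nra|contradiction]. Qed.
Lemma sq_nn x : 0 <= x*x.
Proof. nra. Qed.

Lemma dist_pos C1 S1 C2 S2 : (C1 <> C2 \/ S1 <> S2) -> 0 < (C1-C2)*(C1-C2)+(S1-S2)*(S1-S2).
Proof.
  intros [h|h].
  - assert (0 < (C1-C2)*(C1-C2)) by (apply sq_pos; intro; apply h; lra).
    pose proof (sq_nn (S1-S2)). lra.
  - assert (0 < (S1-S2)*(S1-S2)) by (apply sq_pos; intro; apply h; lra).
    pose proof (sq_nn (C1-C2)). lra.
Qed.

Lemma ortho q g M K C1 S1 C2 S2 C3 S3 : q <> 0 ->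
  C1*C1+S1*S1 = 1 -> C2*C2+S2*S2 = 1 -> C3*C3+S3*S3 = 1 ->
  (C1 <> C2 \/ S1 <> S2) -> (C1 <> C3 \/ S1 <> S3) -> (C2 <> C3 \/ S2 <> S3) ->
  q*(C1*C2+S1*S2) - M*(C1+C2) + K = 0 ->
  q*(C1*C3+S1*S3) - M*(C1+C3) + K = 0 ->
  q*(C2*C3+S2*S3) - M*(C2+C3) + K = 0 ->
  q*g = M ->
  C1+C2+C3 = g /\ S1+S2+S3 = 0.
Proof.
  intros hq u1 u2 u3 d12 d13 d23 f12 f13 f23 hg.
  assert (e1 : q*((C1+C2+C3-g)*(C1-C2) + (S1+S2+S3)*(S1-S2)) = 0).
  { clear - u1 u2 f13 f23 hg. nsatz. }
  assert (e2 : q*((C1+C2+C3-g)*(C1-C3) + (S1+S2+S3)*(S1-S3)) = 0).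
  { clear - u1 u3 f12 f23 hg. nsatz. }
  apply Rmult_integral in e1; destruct e1 as [e1|e1]; [contradiction|].
  apply Rmult_integral in e2; destruct e2 as [e2|e2]; [contradiction|].
  set (D := (C1-C2)*(S1-S3) - (S1-S2)*(C1-C3)).
  assert (hD : D <> 0).
  { intro hD0. pose proof (cross_id _ _ _ _ _ _ u1 u2 u3) as hc. fold D in hc.
    rewrite hD0 in hc.
    pose proof (dist_pos _ _ _ _ d12). pose proof (dist_pos _ _ _ _ d13).
    pose proof (dist_pos _ _ _ _ d23).
    pose proof (Rmult_lt_0_compat _ _ H H0).
    pose proof (Rmult_lt_0_compat _ _ H2 H1). lra. }
  assert (hx : (C1+C2+C3-g)*D = 0).
  { unfold D. transitivity (((C1+C2+C3-g)*(C1-C2) + (S1+S2+S3)*(S1-S2))*(S1-S3)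
       - ((C1+C2+C3-g)*(C1-C3) + (S1+S2+S3)*(S1-S3))*(S1-S2)); [ring|].
    rewrite e1, e2; ring. }
  assert (hy : (S1+S2+S3)*D = 0).
  { unfold D. transitivity (((C1+C2+C3-g)*(C1-C3) + (S1+S2+S3)*(S1-S3))*(C1-C2)
       - ((C1+C2+C3-g)*(C1-C2) + (S1+S2+S3)*(S1-S2))*(C1-C3)); [ring|].
    rewrite e1, e2; ring. }
  apply Rmult_integral in hx; apply Rmult_integral in hy.
  destruct hx as [hx|hx]; [|contradiction]. destruct hy as [hy|hy]; [|contradiction].
  split; lra.
Qed.

Lemma quad a b c m g C1 S1 C2 S2 C3 S3 : c*c = a*a-b*b ->
  C1*C1+S1*S1 = 1 -> C2*C2+S2*S2 = 1 -> C3*C3+S3*S3 = 1 ->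
  (1+m*(c*c))*(C1*C2+S1*S2) - 2*m*a*c*(C1+C2) + (m*(3*(a*a)-b*b)-1) = 0 ->
  (1+m*(c*c))*(C1*C3+S1*S3) - 2*m*a*c*(C1+C3) + (m*(3*(a*a)-b*b)-1) = 0 ->
  (1+m*(c*c))*(C2*C3+S2*S3) - 2*m*a*c*(C2+C3) + (m*(3*(a*a)-b*b)-1) = 0 ->
  (1+m*(c*c))*g = 2*m*a*c ->
  C1+C2+C3 = g -> S1+S2+S3 = 0 ->
  (c*c)*(c*c)*(m*m) + 2*(a*a+b*b)*m - 3 = 0.
Proof. intros. nsatz. Qed.

Lemma gamma_val a b c m g dl : a > 0 -> b > 0 -> c > 0 -> c*c = a*a-b*b -> m >= 0 ->
  dl > 0 -> dl*dl = a*a*(a*a) - a*a*(b*b) + b*b*(b*b) ->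
  (c*c)*(c*c)*(m*m) + 2*(a*a+b*b)*m - 3 = 0 ->
  (1+m*(c*c))*g = 2*m*a*c ->
  a*c*g = 2*(a*a) - b*b - dl.
Proof.
  intros ha hb hc hcc hm hd hdd hq hg.
  assert (h1 : (c*c*(c*c)*m + a*a+b*b)*(c*c*(c*c)*m + a*a+b*b) = (2*dl)*(2*dl)).
  { clear - hcc hdd hq. nsatz. }
  assert (h2 : c*c*(c*c)*m + a*a+b*b = 2*dl).
  { assert (0 <= c*c*(c*c)*m) by (apply Rmult_le_pos; [apply Rmult_le_pos; apply sq_nn|lra]).
    assert (0 < a*a) by nra. assert (0 < b*b) by nra. nra. }
  assert (h3 : (1+m*(c*c))*(a*c*g - (2*(a*a) - b*b - dl)) = 0).
  { clear - hcc hq hg h2. nsatz. }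
  apply Rmult_integral in h3. destruct h3 as [h3|h3].
  - pose proof (sq_nn c). nra.
  - lra.
Qed.






Lemma pair_rel a b X Y X' Y' m : a > 0 -> b > 0 -> X*X+Y*Y = 1 -> X'*X'+Y'*Y' = 1 ->
  (X <> X' \/ Y <> Y') ->
  (Gf a b (a*X, b*Y) (a*X', b*Y'))^2 = m ->
  1 - (X*X'+Y*Y') = m*(a*a+b*b) - m*(a*a-b*b)*(X*X'-Y*Y').
Proof.
  intros ha hb h1 h2 hne hG.
  unfold Gf, pdist, dot, psub, ellipse_normal in hG; cbn [fst snd] in hG.
  set (dd := (a * X' - a * X) * (a * X' - a * X) + (b * Y' - b * Y) * (b * Y' - b * Y)) in hG.
  assert (hdd : dd > 0).
  { unfold dd.
    replace ((a * X' - a * X) * (a * X' - a * X) + (b * Y' - b * Y) * (b * Y' - b * Y))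
      with ((a*a)*((X'-X)*(X'-X)) + (b*b)*((Y'-Y)*(Y'-Y))) by ring.
    assert (0 < a*a) by (apply Rmult_lt_0_compat; lra).
    assert (0 < b*b) by (apply Rmult_lt_0_compat; lra).
    pose proof (sq_nn (X'-X)). pose proof (sq_nn (Y'-Y)).
    destruct hne as [h|h].
    - assert (0 < (X'-X)*(X'-X)) by (apply sq_pos; intro; apply h; lra).
      pose proof (Rmult_lt_0_compat _ _ H H3).
      pose proof (Rmult_le_pos _ _ (Rlt_le _ _ H0) H2). lra.
    - assert (0 < (Y'-Y)*(Y'-Y)) by (apply sq_pos; intro; apply h; lra).
      pose proof (Rmult_lt_0_compat _ _ H0 H3).
      pose proof (Rmult_le_pos _ _ (Rlt_le _ _ H) H1). lra. }
  assert (hnw : a * X / a ^ 2 * (a * X' - a * X) + b * Y / b ^ 2 * (b * Y' - b * Y) = X*X'+Y*Y'-1).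
  { assert (a<>0) by lra. assert (b<>0) by lra.
    transitivity (X*(X'-X)+Y*(Y'-Y)); [field; auto|clear - h1; nsatz]. }
  rewrite hnw in hG.
  assert (hs : sqrt dd * sqrt dd = dd) by (apply sqrt_sqrt; lra).
  assert (hsp : sqrt dd > 0) by (apply sqrt_lt_R0; lra).
  assert (hm : (X*X'+Y*Y'-1)*(X*X'+Y*Y'-1) = m * dd).
  { rewrite <- hG. set (s := sqrt dd) in *. rewrite <- hs. field. lra. }
  assert (hnz : X*X'+Y*Y'-1 <> 0).
  { destruct hne as [h|h].
    - assert (0 < (X-X')*(X-X')) by (apply sq_pos; intro; apply h; lra). nra.
    - assert (0 < (Y-Y')*(Y-Y')) by (apply sq_pos; intro; apply h; lra). nra. }
  assert (hp : (X*X'+Y*Y'-1) * ((1 - (X*X'+Y*Y')) - (m*(a*a+b*b) - m*(a*a-b*b)*(X*X'-Y*Y'))) = 0).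
  { unfold dd in hm. clear - hm h1 h2. nsatz. }
  apply Rmult_integral in hp. destruct hp as [hp|hp]; [contradiction|lra].
Qed.

Lemma e2_re C1 S1 C2 S2 C3 S3 :
  C1*C1+S1*S1 = 1 -> C2*C2+S2*S2 = 1 -> C3*C3+S3*S3 = 1 ->
  (C1*C2 - S1*S2) + (C1*C3 - S1*S3) + (C2*C3 - S2*S3)
  = ((C1*C2-S1*S2)*C3 - (C1*S2+S1*C2)*S3)*(C1+C2+C3)
    + ((C1*C2-S1*S2)*S3 + (C1*S2+S1*C2)*C3)*(S1+S2+S3).
Proof. intros. nsatz. Qed.

Lemma e2_im C1 S1 C2 S2 C3 S3 :
  C1*C1+S1*S1 = 1 -> C2*C2+S2*S2 = 1 -> C3*C3+S3*S3 = 1 ->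
  (C1*S2 + S1*C2) + (C1*S3 + S1*C3) + (C2*S3 + S2*C3)
  = ((C1*C2-S1*S2)*S3 + (C1*S2+S1*C2)*C3)*(C1+C2+C3)
    - ((C1*C2-S1*S2)*C3 - (C1*S2+S1*C2)*S3)*(S1+S2+S3).
Proof. intros. nsatz. Qed.

Lemma e3_abs C1 S1 C2 S2 C3 S3 :
  C1*C1+S1*S1 = 1 -> C2*C2+S2*S2 = 1 -> C3*C3+S3*S3 = 1 ->
  ((C1*C2-S1*S2)*C3 - (C1*S2+S1*C2)*S3)*((C1*C2-S1*S2)*C3 - (C1*S2+S1*C2)*S3)
  + ((C1*C2-S1*S2)*S3 + (C1*S2+S1*C2)*C3)*((C1*C2-S1*S2)*S3 + (C1*S2+S1*C2)*C3) = 1.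
Proof.
  intros h1 h2 h3.
  transitivity ((C1*C1+S1*S1)*(C2*C2+S2*S2)*(C3*C3+S3*S3)); [ring|].
  rewrite h1, h2, h3; ring.
Qed.

Lemma e2_abs g C1 S1 C2 S2 C3 S3 :
  C1*C1+S1*S1 = 1 -> C2*C2+S2*S2 = 1 -> C3*C3+S3*S3 = 1 ->
  C1+C2+C3 = g -> S1+S2+S3 = 0 ->
  ((g*g+3-2*(C1*C1+C2*C2+C3*C3))/2)*((g*g+3-2*(C1*C1+C2*C2+C3*C3))/2)
  + (C1*S1+C2*S2+C3*S3)*(C1*S1+C2*S2+C3*S3) = g*g.
Proof.
  intros h1 h2 h3 hg hs.
  pose proof (e2_re _ _ _ _ _ _ h1 h2 h3) as hr.
  pose proof (e2_im _ _ _ _ _ _ h1 h2 h3) as hi.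
  pose proof (e3_abs _ _ _ _ _ _ h1 h2 h3) as ha.
  rewrite hg, hs in hr, hi.
  set (E3r := (C1*C2-S1*S2)*C3 - (C1*S2+S1*C2)*S3) in *.
  set (E3i := (C1*C2-S1*S2)*S3 + (C1*S2+S1*C2)*C3) in *.
  assert (hre : (g*g+3-2*(C1*C1+C2*C2+C3*C3))/2 = (C1*C2 - S1*S2) + (C1*C3 - S1*S3) + (C2*C3 - S2*S3)).
  { assert (g*g+3-2*(C1*C1+C2*C2+C3*C3) = 2*((C1*C2 - S1*S2) + (C1*C3 - S1*S3) + (C2*C3 - S2*S3))); [|lra].
    rewrite <- hg. assert (S3 = -S1-S2) by lra. subst S3. clear - h1 h2 h3. nsatz. }
  assert (him : C1*S1+C2*S2+C3*S3 = -((C1*S2 + S1*C2) + (C1*S3 + S1*C3) + (C2*S3 + S2*C3))).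
  { assert (S3 = -S1-S2) by lra. subst S3. clear. ring. }
  rewrite hre, him, hr, hi.
  transitivity (g*g*(E3r*E3r+E3i*E3i)); [ring|]. rewrite ha; ring.
Qed.

Lemma final_alg a c k g C1 S1 C2 S2 C3 S3 : a > 0 -> c > 0 ->
  C1*C1+S1*S1 = 1 -> C2*C2+S2*S2 = 1 -> C3*C3+S3*S3 = 1 ->
  C1+C2+C3 = g -> S1+S2+S3 = 0 -> a*c*g = k ->
  2*(a*a)*k + 2*(c*c)*k - k*k - 3*(a*a)*(c*c) = 0 ->
  (a*a*a*g - a*a*c*(C1*C1+C2*C2+C3*C3) + c*k)*(a*a*a*g - a*a*c*(C1*C1+C2*C2+C3*C3) + c*k)
  + a*a*a*a*(c*c)*((C1*S1+C2*S2+C3*S3)*(C1*S1+C2*S2+C3*S3)) = a*a*(k*k).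
Proof.
  intros ha hc h1 h2 h3 hg hs hk hr.
  pose proof (e2_abs _ _ _ _ _ _ _ h1 h2 h3 hg hs) as he.
  set (Q := C1*C1+C2*C2+C3*C3) in *.
  set (Z := C1*S1+C2*S2+C3*S3) in *.
  set (Re := (g*g+3-2*Q)/2) in *.
  assert (hB : c*(2*(a*a*a*g - a*a*c*(g*g+3)/2 + c*k)) = 0).
  { assert (c*(2*(a*a*a*g - a*a*c*(g*g+3)/2 + c*k)) = 2*(a*a)*(a*c*g) - (a*c*g)*(a*c*g) - 3*(a*a)*(c*c) + 2*(c*c)*k) by field.
    rewrite H, hk. lra. }
  apply Rmult_integral in hB. destruct hB as [hB|hB]; [lra|].
  assert (hQ : Q = (g*g+3)/2 - Re) by (unfold Re; field).
  rewrite hQ.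
  transitivity ((a*a*c*Re + (a*a*a*g - a*a*c*(g*g+3)/2 + c*k))*(a*a*c*Re + (a*a*a*g - a*a*c*(g*g+3)/2 + c*k)) + a*a*a*a*(c*c)*(Z*Z)); [field|].
  replace (a*a*a*g - a*a*c*(g*g+3)/2 + c*k) with 0 by lra.
  transitivity (a*a*a*a*(c*c)*(Re*Re+Z*Z)); [ring|]. rewrite he.
  rewrite <- hk. ring.
Qed.

Lemma dpos a c X Y : a > 0 -> c > 0 -> c < a -> X*X+Y*Y = 1 -> a + c*X > 0.
Proof.
  intros ha hc hca h. assert (-1 <= X).
  { destruct (Rle_or_lt (-1) X); auto. pose proof (sq_nn Y). nra. }
  nra.
Qed.

Lemma unit_focal a b c X Y : c*c = a*a-b*b -> X*X+Y*Y = 1 -> a + c*X > 0 ->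
  ((a*X+c)/(a+c*X))*((a*X+c)/(a+c*X)) + (b*Y/(a+c*X))*(b*Y/(a+c*X)) = 1.
Proof.
  intros hc h hd.
  assert (hp : (a*X+c)*(a*X+c) + (b*Y)*(b*Y) = (a+c*X)*(a+c*X)) by (clear hd; nsatz).
  transitivity (((a*X+c)*(a*X+c) + (b*Y)*(b*Y))/((a+c*X)*(a+c*X))); [field; lra|].
  rewrite hp. field. lra.
Qed.

Lemma focal_rel a b c m X Y X' Y' : c*c = a*a-b*b -> a + c*X > 0 -> a + c*X' > 0 ->
  1 - (X*X'+Y*Y') = m*(a*a+b*b) - m*(a*a-b*b)*(X*X'-Y*Y') ->
  (1+m*(c*c))*(((a*X+c)/(a+c*X))*((a*X'+c)/(a+c*X')) + (b*Y/(a+c*X))*(b*Y'/(a+c*X')))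
   - 2*m*a*c*((a*X+c)/(a+c*X) + (a*X'+c)/(a+c*X')) + (m*(3*(a*a)-b*b)-1) = 0.
Proof.
  intros hc hd hd' hE.
  pose proof (focal_poly _ _ _ _ _ _ _ _ hc hE) as hF.
  transitivity (((1+m*(c*c))*((a*X+c)*(a*X'+c) + (b*Y)*(b*Y'))
   - 2*m*a*c*((a*X+c)*(a+c*X') + (a*X'+c)*(a+c*X))
   + (m*(3*(a*a)-b*b)-1)*((a+c*X)*(a+c*X')))/((a+c*X)*(a+c*X'))).
  - field. repeat split; lra.
  - rewrite hF. field. repeat split; lra.
Qed.

Lemma focal_inj a b c X Y X' Y' : b > 0 -> c > 0 -> c*c = a*a-b*b -> a + c*X > 0 -> a + c*X' > 0 ->
  (a*X+c)/(a+c*X) = (a*X'+c)/(a+c*X') -> b*Y/(a+c*X) = b*Y'/(a+c*X') -> X = X' /\ Y = Y'.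
Proof.
  intros hb hc hcc hd hd' hC hS.
  assert (k1 : (a+c*X)*(a - c*((a*X+c)/(a+c*X))) = b*b) by (transitivity (a*a-c*c); [field; lra|lra]).
  assert (k2 : (a+c*X')*(a - c*((a*X'+c)/(a+c*X'))) = b*b) by (transitivity (a*a-c*c); [field; lra|lra]).
  rewrite <- hC in k2.
  assert (hdd : a + c*X = a + c*X').
  { set (t := a - c * ((a * X + c) / (a + c * X))) in *.
    assert (t <> 0). { intro h0. rewrite h0 in k1. nra. }
    apply (Rmult_eq_reg_r t); [lra|auto]. }
  assert (X = X') by nra. subst X'.
  split; auto.
  assert (b*Y = b*Y'). { apply (Rmult_eq_reg_r (/(a+c*X))). exact hS. apply Rinv_neq_0_compat. lra. }
  nra.
Qed.

Lemma focus_inv_eq a b rho c X Y : b > 0 -> c = ell_c a b -> c*c = a*a-b*b -> X*X+Y*Y = 1 -> a + c*X > 0 ->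
  focus_inv a b rho (a*X, b*Y) =
  (-c + rho^2*((a*X+c)/(a+c*X))*(a - c*((a*X+c)/(a+c*X)))/b^2,
   rho^2*(b*Y/(a+c*X))*(a - c*((a*X+c)/(a+c*X)))/b^2).
Proof.
  intros hb hce hc h hd.
  unfold focus_inv, focus1, padd, pscale, psub. rewrite <- hce. cbn [fst snd].
  assert (hdist : pdist (a*X, b*Y) (-c, 0) = a + c*X).
  { unfold pdist, dot, psub; cbn [fst snd].
    replace ((a * X - - c) * (a * X - - c) + (b * Y - 0) * (b * Y - 0)) with ((a+c*X)*(a+c*X)).
    - apply sqrt_square. lra.
    - clear hd hce. nsatz. }
  assert (hk : a - c*((a*X+c)/(a+c*X)) = b^2/(a+c*X)).
  { transitivity ((a*a - c*c)/(a+c*X)); [field; lra|rewrite hc; field; lra]. }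
  rewrite hdist, hk. apply (f_equal2 pair); field; repeat split; lra.
Qed.

Lemma norm_pt a b x y : a > 0 -> b > 0 -> on_ellipse a b (x,y) ->
  exists X Y, x = a*X /\ y = b*Y /\ X*X+Y*Y = 1.
Proof.
  intros ha hb h. exists (x/a), (y/b). split; [field; lra|]. split; [field; lra|].
  unfold on_ellipse in h; cbn [fst snd] in h. rewrite <- h. field. split; lra.
Qed.

Lemma dist_or (X1 Y1 X2 Y2 a b : R) : (a*X1, b*Y1) <> (a*X2, b*Y2) -> X1 <> X2 \/ Y1 <> Y2.
Proof.
  intros h. destruct (Req_dec X1 X2) as [e|e]; destruct (Req_dec Y1 Y2) as [f|f].
  - exfalso; apply h; subst; reflexivity.
  - right; auto.
  - left; auto.
  - left; auto.
Qed.

Theorem mainTheorem11 (a b rho : R) (P1 P2 P3 : pt) :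
  a > b -> b > 0 -> rho > 0 ->
  three_periodic a b P1 P2 P3 ->
  let c := ell_c a b in
  let delta := ell_delta a b in
  let C2 : pt :=
    (- c * (1 + rho ^ 2 * (2 * a ^ 2 - b ^ 2 - delta) / (3 * a ^ 2 * b ^ 2)), 0) in
  let R2 := rho ^ 2 * (2 * a ^ 2 - b ^ 2 - delta) / (3 * a * b ^ 2) in
  let X2 := centroid (focus_inv a b rho P1) (focus_inv a b rho P2)
                     (focus_inv a b rho P3) in
  pdist X2 C2 = R2.
Proof.
  intros hab hb hr H3. cbv zeta.
  destruct P1 as [x1 y1], P2 as [x2 y2], P3 as [x3 y3].
  destruct H3 as [e1 [e2 [e3 [n12 [n23 [n13 [b1 [b2 b3]]]]]]]].
  assert (ha : a > 0) by lra.
  destruct (norm_pt a b x1 y1 ha hb e1) as [X1 [Y1 [-> [-> u1]]]].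
  destruct (norm_pt a b x2 y2 ha hb e2) as [X2 [Y2 [-> [-> u2]]]].
  destruct (norm_pt a b x3 y3 ha hb e3) as [X3 [Y3 [-> [-> u3]]]].
  pose proof (dist_or _ _ _ _ _ _ n12) as dn12.
  pose proof (dist_or _ _ _ _ _ _ n13) as dn13.
  pose proof (dist_or _ _ _ _ _ _ n23) as dn23.
  set (c := ell_c a b). set (delta := ell_delta a b).
  assert (hcc : c*c = a*a - b*b) by (unfold c, ell_c; rewrite sqrt_sqrt; [ring| nra]).
  assert (hc0 : c > 0) by (unfold c, ell_c; apply sqrt_lt_R0; nra).
  assert (hca : c < a).
  { destruct (Rlt_or_le c a) as [h|h]; auto.
    assert (a*a <= c*c) by (apply Rmult_le_compat; lra).
    assert (0 < b*b) by (apply Rmult_lt_0_compat; lra). lra. }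
  assert (hpos : a^4 - a^2*b^2 + b^4 > 0).
  { replace (a^4 - a^2*b^2 + b^4) with ((a*a-b*b)*(a*a-b*b) + (a*b)*(a*b)) by ring.
    pose proof (sq_nn (a*a-b*b)). assert (0 < a*b) by (apply Rmult_lt_0_compat; lra).
    assert (0 < (a*b)*(a*b)) by (apply Rmult_lt_0_compat; lra). lra. }
  assert (hdd : delta*delta = a*a*(a*a) - a*a*(b*b) + b*b*(b*b))
    by (unfold delta, ell_delta; rewrite sqrt_sqrt; [ring| lra]).
  assert (hd0 : delta > 0) by (unfold delta, ell_delta; apply sqrt_lt_R0; lra).
  pose proof (dpos a c X1 Y1 ha hc0 hca u1) as hd1.
  pose proof (dpos a c X2 Y2 ha hc0 hca u2) as hd2.
  pose proof (dpos a c X3 Y3 ha hc0 hca u3) as hd3.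
  rewrite (focus_inv_eq a b rho c X1 Y1 hb eq_refl hcc u1 hd1).
  rewrite (focus_inv_eq a b rho c X2 Y2 hb eq_refl hcc u2 hd2).
  rewrite (focus_inv_eq a b rho c X3 Y3 hb eq_refl hcc u3 hd3).
  (* Joachimsthal invariant *)
  pose proof (nb_G _ _ _ _ _ b1) as g1.
  pose proof (nb_G _ _ _ _ _ b2) as g2.
  pose proof (Gsym a b _ _ ha hb e1 e2) as s12.
  set (m := (Gf a b (a*X1,b*Y1) (a*X2,b*Y2))^2).
  assert (hm0 : m >= 0) by (unfold m; apply Rle_ge; apply pow2_ge_0).
  pose proof (pair_rel a b X1 Y1 X2 Y2 m ha hb u1 u2 dn12 eq_refl) as p12.
  assert (p13 := pair_rel a b X1 Y1 X3 Y3 m ha hb u1 u3 dn13).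
  assert (p23 := pair_rel a b X2 Y2 X3 Y3 m ha hb u2 u3 dn23).
  specialize (p13 ltac:(unfold m; rewrite g1; reflexivity)).
  specialize (p23 ltac:(unfold m; rewrite g2, <- s12; reflexivity)).
  pose proof (focal_rel a b c m _ _ _ _ hcc hd1 hd2 p12) as f12.
  pose proof (focal_rel a b c m _ _ _ _ hcc hd1 hd3 p13) as f13.
  pose proof (focal_rel a b c m _ _ _ _ hcc hd2 hd3 p23) as f23.
  pose proof (unit_focal a b c X1 Y1 hcc u1 hd1) as v1.
  pose proof (unit_focal a b c X2 Y2 hcc u2 hd2) as v2.
  pose proof (unit_focal a b c X3 Y3 hcc u3 hd3) as v3.
  assert (df : forall Xa Ya Xb Yb, a + c*Xa > 0 -> a + c*Xb > 0 -> (Xa <> Xb \/ Ya <> Yb) ->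
     ((a*Xa+c)/(a+c*Xa) <> (a*Xb+c)/(a+c*Xb) \/ b*Ya/(a+c*Xa) <> b*Yb/(a+c*Xb))).
  { intros Xa Ya Xb Yb ha' hb' hn.
    destruct (Req_dec ((a*Xa+c)/(a+c*Xa)) ((a*Xb+c)/(a+c*Xb))) as [h1|h1]; [|left; auto].
    destruct (Req_dec (b*Ya/(a+c*Xa)) (b*Yb/(a+c*Xb))) as [h2|h2]; [|right; auto].
    destruct (focal_inj a b c Xa Ya Xb Yb hb hc0 hcc ha' hb' h1 h2). tauto. }
  pose proof (df _ _ _ _ hd1 hd2 dn12) as df12.
  pose proof (df _ _ _ _ hd1 hd3 dn13) as df13.
  pose proof (df _ _ _ _ hd2 hd3 dn23) as df23.
  clear df.
  set (C1 := (a*X1+c)/(a+c*X1)) in *. set (S1 := b*Y1/(a+c*X1)) in *.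
  set (C2 := (a*X2+c)/(a+c*X2)) in *. set (S2 := b*Y2/(a+c*X2)) in *.
  set (C3 := (a*X3+c)/(a+c*X3)) in *. set (S3 := b*Y3/(a+c*X3)) in *.
  assert (hq : 1 + m*(c*c) > 0) by (assert (0 <= m*(c*c)) by (apply Rmult_le_pos; [lra| apply sq_nn]); lra).
  set (g := 2*m*a*c/(1+m*(c*c))).
  assert (hg : (1+m*(c*c))*g = 2*m*a*c) by (unfold g; field; apply Rgt_not_eq; exact hq).
  destruct (ortho (1+m*(c*c)) g (2*m*a*c) (m*(3*(a*a)-b*b)-1) C1 S1 C2 S2 C3 S3
              (Rgt_not_eq _ _ hq) v1 v2 v3 df12 df13 df23 f12 f13 f23 hg) as [hsC hsS].
  pose proof (quad a b c m g C1 S1 C2 S2 C3 S3 hcc v1 v2 v3 f12 f13 f23 hg hsC hsS) as hquad.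
  pose proof (gamma_val a b c m g delta ha hb hc0 hcc hm0 hd0 hdd hquad hg) as hgam.
  set (k := 2*(a*a) - b*b - delta) in *.
  assert (hkr : 2*(a*a)*k + 2*(c*c)*k - k*k - 3*(a*a)*(c*c) = 0).
  { unfold k. clear - hcc hdd. nsatz. }
  pose proof (final_alg a c k g C1 S1 C2 S2 C3 S3 ha hc0 v1 v2 v3 hsC hsS hgam hkr) as FA.
  assert (hk0 : k > 0).
  { unfold k.
    assert (hx : (2*(a*a)-b*b)*(2*(a*a)-b*b) - delta*delta = 3*((a*a)*(c*c))) by (rewrite hdd, hcc; ring).
    assert (0 < (a*a)*(c*c)) by (apply Rmult_lt_0_compat; apply Rmult_lt_0_compat; lra).
    assert (0 < b*b) by (apply Rmult_lt_0_compat; lra).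
    assert (hK : 0 < 2*(a*a)-b*b) by (assert (0 < c*c) by (apply Rmult_lt_0_compat; lra); lra).
    destruct (Rlt_or_le delta (2*(a*a)-b*b)) as [h|h]; [lra|].
    assert ((2*(a*a)-b*b)*(2*(a*a)-b*b) <= delta*delta) by (apply Rmult_le_compat; lra). lra. }
  unfold centroid, pdist, dot, psub, pscale, padd; cbn [fst snd].
  replace (2*a^2-b^2-delta) with k by (unfold k; ring).
  assert (ha0 : a <> 0) by lra. assert (hb0 : b <> 0) by lra.
  match goal with |- sqrt ?E = ?R => assert (HE : E = R*R) end.
  { transitivity ((rho^2/(3*b^2))^2 * (((a*a*a*(C1+C2+C3) - a*a*c*(C1*C1+C2*C2+C3*C3) + c*k)^2
        + (a*a*a*(S1+S2+S3) - a*a*c*(C1*S1+C2*S2+C3*S3))^2)/(a^4))).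
    { field. split; auto. }
    rewrite hsC, hsS.
    assert (FA' : (a*a*a*g - a*a*c*(C1*C1+C2*C2+C3*C3) + c*k)^2
        + (a*a*a*0 - a*a*c*(C1*S1+C2*S2+C3*S3))^2 = a*a*(k*k)) by (rewrite <- FA; ring).
    rewrite FA'. field. split; auto. }
  rewrite HE. apply sqrt_square.
  apply Rlt_le. apply Rdiv_lt_0_compat.
  - apply Rmult_lt_0_compat; [apply pow_lt; lra|lra].
  - apply Rmult_lt_0_compat; [lra|apply pow_lt; lra].
Qed.
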